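(* Let $1\le p<\infty$ and let $d_{w,p}$ be a Lorentz sequence space. Let $Y$ be a complemented closed subspace of $d_{w,p}$ isomorphic to $\ell_p$, let $P\in L(d_{w,p})$ be a projection with range $Y$, and let $U\colon Y\to\ell_p$ be an isomorphism onto $\ell_p$. If $T=jUP$, then $J_T=J^j$.
   Context: Let $1\le p<\infty$ and let $w=(w_n)$ be a real sequence with $w_1=1$, $w_n\downarrow 0$ and $\sum_n w_n=\infty$. The Lorentz sequence space $d_{w,p}$ is the Banach space of all $x=(x_n)\in c_0$ with $\|x\|_{d_{w,p}}=\big(\sum_{n}w_n (x^*_n)^p\big)^{1/p}<\infty$, where $(x^*_n)$ is the non-increasing rearrangement of $(|x_n|)$. Let $(e_n)$ be the unit vector basis of $d_{w,p}$ and $(f_n)$ that of $\ell_p$; $j\colon\ell_p\to d_{w,p}$ is the formal identity, $j(f_n)=e_n$. $J^j$ is the set of operators $S\in L(d_{w,p})$ of the form $S=AjB$ with $A\in L(d_{w,p})$, $B\in L(d_{w,p},\ell_p)$. $J_T=\{\sum_{i=1}^n A_iTB_i: n\in\mathbb N, A_i,B_i\in L(d_{w,p})\}$ is the ideal generated by $T$. *)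

(* Defs.v *)
From HB Require Import structures.
From mathcomp Require Import all_boot all_order all_algebra.
From mathcomp Require Import all_classical all_reals all_analysis.
Set Implicit Arguments. Unset Strict Implicit. Unset Printing Implicit Defensive.
Import Order.TTheory GRing.Theory Num.Theory.
Import numFieldNormedType.Exports.
Local Open Scope classical_set_scope.
Local Open Scope ring_scope.

Section Defs.
Variable R : realType.
Notation seqR := (nat -> R).

Definition lp_mem (p : R) (x : seqR) : Prop :=
  (\sum_(n <oo) ((`|x n| `^ p)%:E) < +oo)%E.
Definition lp_norm (p : R) (x : seqR) : R :=
  (fine (\sum_(n <oo) ((`|x n| `^ p)%:E))) `^ p^-1.

Definition c0_mem (x : seqR) : Prop := x n @[n --> \oo] --> (0 : R).

(* non-increasing rearrangement of (|x_n|) (0-indexed): x*_n is the infimum,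
   over all sets F of at most n indices, of sup_{k notin F} |x_k| *)
Definition rearr (x : seqR) (n : nat) : R :=
  inf [set sup [set `|x k| | k in [set k | k \notin s]]
      | s in [set s : seq nat | (size s <= n)%N]].

(* admissible weight sequence: w_1 = 1 (index 0 here), w_n decreasing to 0,
   sum w_n = oo *)
Definition lorentz_weight (w : seqR) : Prop :=
  w 0%N = 1 /\ (forall n m : nat, (n <= m)%N -> w m <= w n) /\
  (w n @[n --> \oo] --> (0 : R)) /\ (\sum_(n <oo) (w n)%:E = +oo)%E.

Definition d_mem (w : seqR) (p : R) (x : seqR) : Prop :=
  c0_mem x /\ (\sum_(n <oo) ((w n * rearr x n `^ p)%:E) < +oo)%E.
Definition d_norm (w : seqR) (p : R) (x : seqR) : R :=
  (fine (\sum_(n <oo) ((w n * rearr x n `^ p)%:E))) `^ p^-1.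

(* f is a bounded linear operator from (X, nX) to (Y, nY), where X, Y are
   sets of sequences; only values of f on X matter *)
Definition is_op (X : set seqR) (nX : seqR -> R) (Y : set seqR) (nY : seqR -> R)
  (f : seqR -> seqR) : Prop :=
  (forall x, X x -> Y (f x)) /\
  (forall (a : R) x y, X x -> X y ->
     f (fun n => a * x n + y n) = (fun n => a * f x n + f y n)) /\
  exists C : R, forall x, X x -> nY (f x) <= C * nX x.

Definition dwp (w : seqR) (p : R) : set seqR := d_mem w p.
Definition lp (p : R) : set seqR := lp_mem p.

Definition Ld (w : seqR) (p : R) := is_op (dwp w p) (d_norm w p) (dwp w p) (d_norm w p).
Definition Ldl (w : seqR) (p : R) := is_op (dwp w p) (d_norm w p) (lp p) (lp_norm p).

(* the formal identity j : l_p -> d_{w,p} *)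
Definition jmap : seqR -> seqR := fun x => x.

(* J^j = { A j B : A in L(d), B in L(d, l_p) } (operators compared on d) *)
Definition Jj (w : seqR) (p : R) (S : seqR -> seqR) : Prop :=
  Ld w p S /\ exists A B, Ld w p A /\ Ldl w p B /\
    forall x, dwp w p x -> S x = A (jmap (B x)).

Definition JT (w : seqR) (p : R) (T : seqR -> seqR) (S : seqR -> seqR) : Prop :=
  Ld w p S /\ exists (n : nat) (A B : nat -> seqR -> seqR),
    (forall i, (i < n)%N -> Ld w p (A i) /\ Ld w p (B i)) /\
    forall x, dwp w p x ->
      S x = (fun k => \sum_(i < n) A i (T (B i x)) k).

Definition closed_subspace_d (w : seqR) (p : R) (Y : set seqR) : Prop :=
  (forall y, Y y -> dwp w p y) /\ Y (fun _ => 0) /\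
  (forall (a : R) y z, Y y -> Y z -> Y (fun n => a * y n + z n)) /\
  (forall (u : nat -> seqR) x, (forall k, Y (u k)) -> dwp w p x ->
     (d_norm w p (fun n => u k n - x n) @[k --> \oo] --> (0 : R)) -> Y x).

End Defs.

(* Main.v *)
Require Import Defs.
From HB Require Import structures.
From mathcomp Require Import all_boot all_order all_algebra.
From mathcomp Require Import all_classical all_reals all_analysis.
From mathcomp Require Import zify ring lra.
Import Order.TTheory GRing.Theory Num.Theory.
Import numFieldNormedType.Exports.
Local Open Scope classical_set_scope.
Local Open Scope ring_scope.


Set Implicit Arguments. Unset Strict Implicit.

Section H.
Variable R : realType.
Notation seqR := (nat -> R).

Lemma series_le_ub (g : nat -> \bar R) (M : \bar R) :
  (forall n, (0 <= g n)%E) ->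
  (forall N, (\sum_(0 <= i < N) g i <= M)%E) -> (\sum_(i <oo) g i <= M)%E.
Proof.
move=> g0 HN.
rewrite (cvg_lim _ (ereal_nondecreasing_cvgn (ereal_nondecreasing_series (P:=xpredT) (N:=0) (fun n _ _ => g0 n)))) //.
apply: ge_ereal_sup => _ [n _ <-]; exact: HN.
Qed.

Lemma psum_pair (g : nat -> \bar R) N :
  (\sum_(0 <= i < N.*2) g i = \sum_(0 <= k < N) (g k.*2 + g k.*2.+1))%E.
Proof.
elim: N => [|N IH]; first by rewrite !big_geq.
rewrite doubleS big_nat_recr //= big_nat_recr //= IH big_nat_recr //=.
by rewrite addeA.
Qed.

Lemma series_pair (g : nat -> \bar R) : (forall n, (0 <= g n)%E) ->
  (\sum_(i <oo) g i <= \sum_(k <oo) (g k.*2 + g k.*2.+1))%E.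
Proof.
move=> g0; apply: series_le_ub => // N.
apply: (@le_trans _ _ (\sum_(0 <= i < N.*2) g i)%E).
  apply: lee_sum_nneg_natr => //; rewrite -addnn; lia.
rewrite psum_pair; apply: nneseries_lim_ge => n _ _; exact: adde_ge0.
Qed.

Lemma powR_addle (u v r : R) : 0 <= u -> 0 <= v -> 0 <= r ->
  (u + v) `^ r <= 2 `^ r * (u `^ r + v `^ r).
Proof.
move=> u0 v0 r0.
wlog uv : u v u0 v0 / u <= v.
  move=> H; have [|] := leP u v; first exact: H.
  move=> /ltW vu; rewrite addrC [u `^ r + _]addrC; exact: H.
apply: (@le_trans _ _ ((2 * v) `^ r)).
  apply: ge0_ler_powR => //; rewrite ?nnegrE ?addr_ge0 ?mulr_ge0 //.
  by rewrite mulr2n mulrDl mul1r lerD2r.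
rewrite powRM // ler_pM2l ?powR_gt0 // lerDr powR_ge0 //.
Qed.

Lemma sumn_notin (s : seq nat) : (sumn s).+1 \notin s.
Proof.
have H : forall x, x \in s -> (x <= sumn s)%N.
  elim: s => [//|a s IH] x; rewrite in_cons => /orP[/eqP->|/IH]/=; lia.
by apply/negP => /H; lia.
Qed.

Definition bnd (x : seqR) := exists M, forall k, `|x k| <= M.

Lemma c0_bnd x : c0_mem x -> bnd x.
Proof.
move=> cx.
have : cvgn x by apply/cvg_ex; exists 0.
move/cvg_seq_bounded => [M [_ HM]].
exists (M + 1) => k; apply: (HM (M+1)); first by rewrite ltrDl.
by [].
Qed.

Definition Tset (x : seqR) (s : seq nat) := [set `|x k| | k in [set k | k \notin s]].
Definition sx (x : seqR) s := sup (Tset x s).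

Lemma Tset_ne x s : Tset x s !=set0.
Proof. by exists `|x (sumn s).+1|; exists (sumn s).+1 => //; exact: sumn_notin. Qed.

Lemma Tset_ub x s : bnd x -> has_ubound (Tset x s).
Proof. by move=> [M HM]; exists M => _ [k _ <-]. Qed.

Lemma sx_ge x s k : bnd x -> k \notin s -> `|x k| <= sx x s.
Proof. by move=> bx ks; apply: ub_le_sup; [exact: Tset_ub|exists k]. Qed.

Lemma sx_ge0 x s : bnd x -> 0 <= sx x s.
Proof. move=> bx; apply: le_trans (sx_ge bx (sumn_notin s)); exact: normr_ge0. Qed.

Lemma sx_le x s (M : R) : (forall k, k \notin s -> `|x k| <= M) -> sx x s <= M.
Proof. by move=> H; apply: ge_sup; [exact: Tset_ne|move=> _ [k ks <-]; exact: H]. Qed.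

Lemma rearrE x n : rearr x n = inf [set sx x s | s in [set s : seq nat | (size s <= n)%N]].
Proof. by []. Qed.

Lemma Sset_ne x n : [set sx x s | s in [set s : seq nat | (size s <= n)%N]] !=set0.
Proof. by exists (sx x [::]); exists [::]. Qed.

Lemma rearr_le x n s : bnd x -> (size s <= n)%N -> rearr x n <= sx x s.
Proof.
move=> bx sn; rewrite rearrE; apply: ge_inf; last by exists s.
by exists 0 => _ [t _ <-]; exact: sx_ge0.
Qed.

Lemma rearr_ge0 x n : bnd x -> 0 <= rearr x n.
Proof.
move=> bx; rewrite rearrE; apply: lb_le_inf; first exact: Sset_ne.
by move=> _ [t _ <-]; exact: sx_ge0.
Qed.

Lemma rearr_add x y n m : bnd x -> bnd y -> (n.*2 <= m)%N ->
  rearr (fun k => x k + y k) m <= rearr x n + rearr y n.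
Proof.
move=> bx byy nm.
have bz : bnd (fun k => x k + y k).
  case: bx => Mx Hx; case: byy => My Hy; exists (Mx + My) => k.
  exact: le_trans (ler_normD _ _) (lerD (Hx k) (Hy k)).
rewrite -lerBlDr [rearr x n]rearrE; apply: lb_le_inf; first exact: Sset_ne.
move=> _ [s ss <-]; rewrite lerBlDr addrC -lerBlDr [rearr y n]rearrE.
apply: lb_le_inf; first exact: Sset_ne.
move=> _ [t tt <-]; rewrite lerBlDr.
apply: (@le_trans _ _ (sx (fun k => x k + y k) (s ++ t))).
  apply: rearr_le => //; rewrite size_cat; move: ss tt nm; rewrite /= -addnn; lia.
apply: sx_le => k; rewrite mem_cat negb_or => /andP[ks kt].
apply: le_trans (ler_normD _ _) _; rewrite addrC.
by apply: lerD; apply: sx_ge.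
Qed.

Lemma rearr_sub y (b : bool) n : bnd y ->
  rearr (fun k => y (b + k.*2)%N) n <= rearr y n.
Proof.
move=> byy.
have bz : bnd (fun k => y (b + k.*2)%N) by case: byy => M HM; exists M.
rewrite [rearr y n]rearrE; apply: lb_le_inf; first exact: Sset_ne.
move=> _ [s ss <-].
apply: (@le_trans _ _ (sx (fun k => y (b + k.*2)%N) (map half s))).
  by apply: rearr_le => //; rewrite size_map.
apply: sx_le => k ks; apply: sx_ge => //; apply: contra ks => H.
by rewrite -(half_bit_double k b); apply: map_f.
Qed.


Lemma w_ge0 (w : seqR) : lorentz_weight w -> forall n, 0 <= w n.
Proof.
move=> [_ [wd [wc _]]] n.
have := @nonincreasing_cvgn_ge _ w (fun a b ab => wd a b ab) (cvgP _ wc) n.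
by rewrite (cvg_lim _ wc).
Qed.

Definition Dser (w : seqR) (p : R) (x : seqR) := (\sum_(n <oo) ((w n * rearr x n `^ p)%:E))%E.

Lemma Dser_ge0 (w : seqR) (p : R) x : lorentz_weight w -> (0 <= Dser w p x)%E.
Proof.
move=> lw; apply: nneseries_ge0 => n _ _; rewrite lee_fin mulr_ge0 ?powR_ge0 //.
exact: w_ge0.
Qed.

Lemma Dser_add (w : seqR) (p : R) x y : lorentz_weight w -> 0 <= p -> bnd x -> bnd y ->
  (Dser w p (fun k => (x k + y k)%R) <= (2 * 2 `^ p)%:E * (Dser w p x + Dser w p y))%E.
Proof.
move=> lw p0 bx byy; have w0 := w_ge0 lw.
have [_ [wd _]] := lw.
apply: le_trans (series_pair _) _.
  by move=> n; rewrite lee_fin mulr_ge0 ?powR_ge0.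
rewrite /Dser -nneseriesD; first last.
- by move=> n _ _; rewrite lee_fin mulr_ge0 ?powR_ge0.
- by move=> n _ _; rewrite lee_fin mulr_ge0 ?powR_ge0.
rewrite -nneseriesZl; last by move=> n _; rewrite adde_ge0 // lee_fin mulr_ge0 ?powR_ge0.
apply: lee_nneseries.
  by move=> n _ _; rewrite adde_ge0 // lee_fin mulr_ge0 ?powR_ge0.
move=> k _; rewrite -EFinD -EFinD -EFinM lee_fin.
have hz : forall m, (k.*2 <= m)%N ->
    rearr (fun k0 => x k0 + y k0) m `^ p <= (rearr x k + rearr y k) `^ p.
  move=> m km; apply: ge0_ler_powR => //; rewrite ?nnegrE ?addr_ge0 ?rearr_ge0 //.
    case: bx => Mx Hx; case: byy => My Hy; exists (Mx + My) => j.
    exact: le_trans (ler_normD _ _) (lerD (Hx j) (Hy j)).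
  exact: rearr_add.
have h1 : w k.*2 * rearr (fun k0 => x k0 + y k0) k.*2 `^ p <=
    w k * (rearr x k + rearr y k) `^ p.
  apply: ler_pM; rewrite ?w0 ?powR_ge0 //; [apply: wd; lia| exact: hz].
have h2 : w k.*2.+1 * rearr (fun k0 => x k0 + y k0) k.*2.+1 `^ p <=
    w k * (rearr x k + rearr y k) `^ p.
  apply: ler_pM; rewrite ?w0 ?powR_ge0 //; [apply: wd; lia| apply: hz; lia].
apply: le_trans (lerD h1 h2) _.
have hp := powR_addle (rearr_ge0 k bx) (rearr_ge0 k byy) p0.
set A := (_ + _) `^ p in hp *; set a := rearr x k `^ p in hp *; set b := rearr y k `^ p in hp *.
have -> : w k * A + w k * A = 2 * (w k * A) by ring.
have -> : 2 * 2 `^ p * (w k * a + w k * b) = 2 * (w k * (2 `^ p * (a + b))) by ring.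
by rewrite ler_pM2l // ler_wpM2l ?w0.
Qed.

End H.


Section H2.
Variable R : realType.
Notation seqR := (nat -> R).
Lemma Dser_fin (w : seqR) (p : R) x : lorentz_weight w -> (Dser w p x < +oo)%E ->
  (fine (Dser w p x))%:E = Dser w p x.
Proof. by move=> lw h; rewrite fineK // ge0_fin_numE // Dser_ge0. Qed.

Lemma Dser_finnum (w : seqR) (p : R) x : lorentz_weight w -> (Dser w p x < +oo)%E ->
  Dser w p x \is a fin_num.
Proof. by move=> lw h; rewrite ge0_fin_numE // Dser_ge0. Qed.

Lemma d_normE (w : seqR) (p : R) x : d_norm w p x = fine (Dser w p x) `^ p^-1.
Proof. by []. Qed.

Lemma fine_Dser_ge0 (w : seqR) (p : R) x : lorentz_weight w -> 0 <= fine (Dser w p x).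
Proof. by move=> lw; apply: fine_ge0; exact: Dser_ge0. Qed.

Lemma c0_add (x y : nat -> R) : c0_mem x -> c0_mem y -> c0_mem (fun k => x k + y k).
Proof.
move=> cx cy; rewrite /c0_mem.
have := cvgD cx cy; rewrite addr0; exact.
Qed.
Lemma c0_comp (y : nat -> R) (b:bool) : c0_mem y -> c0_mem (fun k => y (b + k.*2)%N).
Proof.
move=> cy.
  have hf : (fun k => (b + k.*2)%N) @ \oo --> \oo.
    move=> P [n _ Pn]; exists n => // m /= hm; apply: Pn; rewrite /=.
    apply: leq_trans hm _; rewrite -addnn; apply: leq_trans (leq_addr _ _) _; apply: leq_addl.
  exact: cvg_comp hf cy.
Qed.

Definition Kp (p : R) := (2 * 2 `^ p) `^ p^-1 * 2 `^ p^-1.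

Lemma d_add (w : seqR) (p : R) x y : lorentz_weight w -> 1 <= p ->
  d_mem w p x -> d_mem w p y ->
  d_mem w p (fun k => x k + y k) /\
  d_norm w p (fun k => x k + y k) <= Kp p * (d_norm w p x + d_norm w p y).
Proof.
move=> lw p1 [cx fx] [cy fy].
have p0 : 0 <= p by apply: le_trans p1.
have bx := c0_bnd cx; have byy := c0_bnd cy.
have := Dser_add lw p0 bx byy.
rewrite -(Dser_fin lw fx) -(Dser_fin lw fy) -EFinD -EFinM => hz.
have fz : (Dser w p (fun k => (x k + y k)%R) < +oo)%E.
  exact: le_lt_trans hz (ltry _).
split.
  split; last exact: fz.
  exact: c0_add.
have hz' : fine (Dser w p (fun k => (x k + y k)%R)) <=
    2 * 2 `^ p * (fine (Dser w p x) + fine (Dser w p y)).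
  rewrite -lee_fin (Dser_fin lw fz); exact: hz.
rewrite d_normE.
have a0 := fine_Dser_ge0 p x lw; have b0 := fine_Dser_ge0 p y lw.
apply: (@le_trans _ _ ((2 * 2 `^ p * (fine (Dser w p x) + fine (Dser w p y))) `^ p^-1)).
  apply: ge0_ler_powR.
  - by rewrite invr_ge0.
  - rewrite nnegrE; exact: fine_Dser_ge0.
  - rewrite nnegrE. apply: mulr_ge0. apply: mulr_ge0. exact: ler0n. exact: powR_ge0. exact: (addr_ge0 a0 b0).
  - exact: hz'.
have c0 : 0 <= 2 * 2 `^ p :> R by apply: mulr_ge0; [exact: ler0n|exact: powR_ge0].
rewrite (powRM _ c0 (addr_ge0 a0 b0)) /Kp -mulrA.
apply: ler_wpM2l; first exact: powR_ge0.
apply: powR_addle a0 b0 _; rewrite invr_ge0; exact: p0.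
Qed.

Lemma d_sub (w : seqR) (p : R) y (b : bool) : lorentz_weight w -> 0 <= p ->
  d_mem w p y ->
  d_mem w p (fun k => y (b + k.*2)%N) /\
  d_norm w p (fun k => y (b + k.*2)%N) <= d_norm w p y.
Proof.
move=> lw p0 [cy fy].
have byy := c0_bnd cy.
have hs : (Dser w p (fun k => y (b + k.*2)%N) <= Dser w p y)%E.
  apply: lee_nneseries.
    move=> n _ _; rewrite lee_fin; apply: mulr_ge0; [exact: w_ge0|exact: powR_ge0].
  move=> n _; rewrite lee_fin; apply: ler_wpM2l; first exact: w_ge0.
  apply: ge0_ler_powR; first exact: p0.
  - rewrite nnegrE; apply: rearr_ge0; case: byy => M HM; exists M => k; exact: HM.
  - rewrite nnegrE; exact: rearr_ge0 byy.
  - exact: rearr_sub.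
have fz : (Dser w p (fun k => y (b + k.*2)%N) < +oo)%E by exact: le_lt_trans hs fy.
split; first by split; [exact: c0_comp|exact: fz].
have hs' : fine (Dser w p (fun k => y (b + k.*2)%N)) <= fine (Dser w p y).
  exact: fine_le (Dser_finnum lw fz) (Dser_finnum lw fy) hs.
rewrite !d_normE; apply: ge0_ler_powR.
- rewrite invr_ge0; exact: p0.
- rewrite nnegrE; exact: fine_Dser_ge0.
- rewrite nnegrE; exact: fine_Dser_ge0.
- exact: hs'.
Qed.

End H2.


Section H3.
Variable R : realType.
Notation seqR := (nat -> R).

Lemma op_bound (X Y : set seqR) nX nY (f : seqR -> seqR) :
  is_op X nX Y nY f -> (forall x, X x -> 0 <= nX x) ->
  exists C, 0 <= C /\ forall x, X x -> nY (f x) <= C * nX x.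
Proof.
move=> [_ [_ [C HC]]] h; exists (Num.max C 0); split; first by rewrite le_max lexx orbT.
move=> x Xx; apply: le_trans (HC x Xx) _; apply: ler_wpM2r; first exact: h.
by rewrite le_max lexx.
Qed.

Lemma op_comp (X Y Z : set seqR) nX nY nZ (f g : seqR -> seqR) :
  is_op X nX Y nY f -> is_op Y nY Z nZ g -> (forall x, X x -> 0 <= nX x) ->
  (forall x, Y x -> 0 <= nY x) ->
  is_op X nX Z nZ (fun x => g (f x)).
Proof.
move=> hf hg hX hY.
have [Cf [Cf0 Hf]] := op_bound hf hX.
have [Cg [Cg0 Hg]] := op_bound hg hY.
case: hf => fXY [fl _]; case: hg => gYZ [gl _].
split; first by move=> x Xx; apply: gYZ; apply: fXY.
split; first by move=> a x y Xx Xy; rewrite fl // gl //; apply: fXY.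
exists (Cg * Cf) => x Xx; apply: le_trans (Hg _ (fXY _ Xx)) _.
rewrite -mulrA; apply: (ler_wpM2l Cg0); exact: Hf.
Qed.

Lemma d_norm_ge0 (w : seqR) p x : 0 <= d_norm w p x.
Proof. exact: powR_ge0. Qed.

Lemma lp_norm_ge0 p x : 0 <= lp_norm p x :> R.
Proof. exact: powR_ge0. Qed.

Lemma Ld_add (w : seqR) p f g : lorentz_weight w -> 1 <= p -> Ld w p f -> Ld w p g ->
  Ld w p (fun x k => f x k + g x k).
Proof.
move=> lw p1 hf hg.
have [Cf [Cf0 Hf]] := op_bound hf (fun x _ => d_norm_ge0 w p x).
have [Cg [Cg0 Hg]] := op_bound hg (fun x _ => d_norm_ge0 w p x).
case: hf => fXY [fl _]; case: hg => gYZ [gl _].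
split; first by move=> x Xx; exact: (d_add lw p1 (fXY _ Xx) (gYZ _ Xx)).1.
split.
  move=> a x y Xx Xy; rewrite fl // gl //; apply: funext => k /=; ring.
exists (Kp p * (Cf + Cg)) => x Xx.
apply: le_trans (d_add lw p1 (fXY _ Xx) (gYZ _ Xx)).2 _.
rewrite -mulrA; apply: ler_wpM2l.
  rewrite /Kp; apply: mulr_ge0; exact: powR_ge0.
rewrite mulrDl; apply: lerD; [exact: Hf|exact: Hg].
Qed.

Definition sub (b : bool) (y : seqR) : seqR := fun k => y (b + k.*2)%N.

Lemma Ld_sub (w : seqR) p b : lorentz_weight w -> 1 <= p -> Ld w p (sub b).
Proof.
move=> lw p1; have p0 : 0 <= p by apply: le_trans p1.
split; first by move=> x Xx; exact: (d_sub b lw p0 Xx).1.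
split; first by [].
exists 1 => x Xx; rewrite mul1r; exact: (d_sub b lw p0 Xx).2.
Qed.

Lemma rearr0 n : rearr (fun _ : nat => 0 : R) n = 0.
Proof.
apply/eqP; rewrite eq_le; apply/andP; split; last first.
  apply: rearr_ge0; exists 0 => k; rewrite normr0; exact: lexx.
apply: le_trans (rearr_le (s := [::]) _ _) _.
- by exists 0 => k; rewrite normr0.
- by [].
apply: sx_le => k _; rewrite normr0; exact: lexx.
Qed.

Lemma dwp0 (w : seqR) p : 0 < p -> dwp w p (fun _ => 0).
Proof.
move=> p0; split; first exact: cvg_cst.
rewrite eseries0; first exact: ltry.
by move=> n _ _; rewrite rearr0 powR0 ?mulr0 // gt_eqF.
Qed.

Lemma d_norm0 (w : seqR) p : 0 < p -> d_norm w p (fun _ => 0) = 0.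
Proof.
move=> p0; rewrite /d_norm eseries0 /=; first by rewrite powR0 // invr_neq0 // gt_eqF.
by move=> n _ _; rewrite rearr0 powR0 ?mulr0 // gt_eqF.
Qed.

Lemma lp0 p : 0 < p -> lp p (fun _ => 0 : R).
Proof.
move=> p0; rewrite /lp /lp_mem eseries0; first exact: ltry.
by move=> n _ _; rewrite normr0 powR0 // gt_eqF.
Qed.

Lemma lp_norm0 p : 0 < p -> lp_norm p (fun _ => 0 : R) = 0.
Proof.
move=> p0; rewrite /lp_norm eseries0 /=; first by rewrite powR0 // invr_neq0 // gt_eqF.
by move=> n _ _; rewrite normr0 powR0 // gt_eqF.
Qed.

Lemma Ld_zero (w : seqR) p : 0 < p -> Ld w p (fun _ _ => 0).
Proof.
move=> p0.
split; first by move=> _ _; exact: dwp0.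
split; first by move=> a x y _ _; apply: funext => k; rewrite mulr0 addr0.
by exists 0 => x _; rewrite mul0r d_norm0.
Qed.

Lemma Ldl_zero (w : seqR) p : 0 < p -> Ldl w p (fun _ _ => 0).
Proof.
move=> p0.
split; first by move=> _ _; exact: lp0.
split; first by move=> a x y _ _; apply: funext => k; rewrite mulr0 addr0.
by exists 0 => x _; rewrite mul0r lp_norm0.
Qed.

End H3.


Section H4.
Variable R : realType.
Notation seqR := (nat -> R).

Definition Lser (p : R) (x : seqR) := (\sum_(n <oo) ((`|x n| `^ p)%:E))%E.
Definition inter (a c : seqR) : seqR := fun m => if odd m then c m./2 else a m./2.

Lemma Lser_ge0 p x : (0 <= Lser p x)%E.
Proof. apply: nneseries_ge0 => n _ _; rewrite lee_fin; exact: powR_ge0. Qed.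

Lemma Lser_finnum p x : (Lser p x < +oo)%E -> Lser p x \is a fin_num.
Proof. by move=> h; rewrite ge0_fin_numE // Lser_ge0. Qed.

Lemma Lser_inter p a c : (Lser p (inter a c) <= Lser p a + Lser p c)%E.
Proof.
apply: le_trans (series_pair _) _.
  by move=> n; rewrite lee_fin; exact: powR_ge0.
rewrite /Lser -nneseriesD; first last.
- by move=> n _ _; rewrite lee_fin; exact: powR_ge0.
- by move=> n _ _; rewrite lee_fin; exact: powR_ge0.
apply: lee_nneseries.
  by move=> n _ _; apply: adde_ge0; rewrite lee_fin; exact: powR_ge0.
move=> k _; rewrite /inter /= odd_double doubleK uphalf_double /=.
exact: lexx.
Qed.

Lemma lp_inter p a c : 0 < p -> lp p a -> lp p c ->
  lp p (inter a c) /\ lp_norm p (inter a c) <= 2 `^ p^-1 * (lp_norm p a + lp_norm p c).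
Proof.
move=> p0 fa fc.
have hs := Lser_inter p a c.
have fz : (Lser p (inter a c) < +oo)%E.
  apply: le_lt_trans hs _; rewrite -(fineK (Lser_finnum fa)) -(fineK (Lser_finnum fc)).
  exact: ltry.
split; first exact: fz.
have a0 : 0 <= fine (Lser p a) by apply: fine_ge0; exact: Lser_ge0.
have c0 : 0 <= fine (Lser p c) by apply: fine_ge0; exact: Lser_ge0.
have hs' : fine (Lser p (inter a c)) <= fine (Lser p a) + fine (Lser p c).
  rewrite -(fineD (Lser_finnum fa) (Lser_finnum fc)).
  apply: fine_le; [exact: Lser_finnum fz| |exact: hs].
  by rewrite fin_numD; apply/andP; split; apply: Lser_finnum.
rewrite /lp_norm.
apply: le_trans (_ : (fine (Lser p a) + fine (Lser p c)) `^ p^-1 <= _).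
  apply: ge0_ler_powR.
  - by rewrite invr_ge0 ltW.
  - rewrite nnegrE; apply: fine_ge0; exact: Lser_ge0.
  - rewrite nnegrE; exact: (addr_ge0 a0 c0).
  - exact: hs'.
apply: powR_addle a0 c0 _; by rewrite invr_ge0 ltW.
Qed.

Lemma Ldl_inter (w : seqR) p f g : 0 < p -> Ldl w p f -> Ldl w p g ->
  Ldl w p (fun x => inter (f x) (g x)).
Proof.
move=> p0 hf hg.
have [Cf [Cf0 Hf]] := op_bound hf (fun x _ => d_norm_ge0 w p x).
have [Cg [Cg0 Hg]] := op_bound hg (fun x _ => d_norm_ge0 w p x).
case: hf => fXY [fl _]; case: hg => gYZ [gl _].
split; first by move=> x Xx; exact: (lp_inter p0 (fXY _ Xx) (gYZ _ Xx)).1.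
split.
  move=> a x y Xx Xy; rewrite fl // gl //; apply: funext => k; rewrite /inter.
  by case: (odd k).
exists (2 `^ p^-1 * (Cf + Cg)) => x Xx.
apply: le_trans (lp_inter p0 (fXY _ Xx) (gYZ _ Xx)).2 _.
rewrite -mulrA; apply: ler_wpM2l; first exact: powR_ge0.
rewrite mulrDl; apply: lerD; [exact: Hf|exact: Hg].
Qed.

End H4.


Section H5.
Variable R : realType.
Notation seqR := (nat -> R).

Definition Jex (w : seqR) (p : R) (S : seqR -> seqR) : Prop :=
  exists A B, Ld w p A /\ Ldl w p B /\ forall x, dwp w p x -> S x = A (jmap (B x)).

Lemma Jex_ext (w : seqR) p S S' : (forall x, dwp w p x -> S x = S' x) -> Jex w p S' -> Jex w p S.
Proof.
move=> h [A [B [hA [hB hS]]]]; exists A, B; split => //; split => // x Xx.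
by rewrite h // hS.
Qed.

Lemma Jex_zero (w : seqR) p : 0 < p -> Jex w p (fun _ _ => 0).
Proof.
move=> p0; exists (fun _ _ => 0), (fun _ _ => 0); split; first exact: Ld_zero.
by split; first exact: Ldl_zero.
Qed.

Lemma sub_inter0 (a c : seqR) : sub false (inter a c) = a.
Proof. by apply: funext => k; rewrite /sub /inter /= add0n odd_double doubleK. Qed.

Lemma sub_inter1 (a c : seqR) : sub true (inter a c) = c.
Proof. by apply: funext => k; rewrite /sub /inter /= add0n odd_double uphalf_double. Qed.

Lemma Jex_add (w : seqR) p S1 S2 : lorentz_weight w -> 1 <= p ->
  Jex w p S1 -> Jex w p S2 -> Jex w p (fun x k => S1 x k + S2 x k).
Proof.
move=> lw p1 [A1 [B1 [hA1 [hB1 hS1]]]] [A2 [B2 [hA2 [hB2 hS2]]]].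
have p0 : 0 < p by apply: lt_le_trans p1; exact: ltr01.
exists (fun y k => A1 (sub false y) k + A2 (sub true y) k), (fun x => inter (B1 x) (B2 x)).
split.
  apply: (Ld_add lw p1).
  - apply: (op_comp (Ld_sub false lw p1) hA1); move=> x _; exact: d_norm_ge0.
  - apply: (op_comp (Ld_sub true lw p1) hA2); move=> x _; exact: d_norm_ge0.
split; first exact: (Ldl_inter p0 hB1 hB2).
move=> x Xx; rewrite /jmap sub_inter0 sub_inter1 hS1 // hS2 //.
Qed.

Lemma Ld_to_Y (w : seqR) p (Y : set seqR) P : Ld w p P -> (forall x, dwp w p x -> Y (P x)) ->
  is_op (dwp w p) (d_norm w p) Y (d_norm w p) P.
Proof. by move=> [_ h] hY; split. Qed.

End H5.

Unset Implicit Arguments.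

Theorem proposition4p2 (R : realType) (p : R) (w : nat -> R)
  (Y : set (nat -> R)) (P U : (nat -> R) -> (nat -> R)) :
  1 <= p ->
  lorentz_weight w ->
  closed_subspace_d w p Y ->
  (* P in L(d_{w,p}) is a projection with range Y *)
  Ld w p P ->
  (forall x, dwp w p x -> Y (P x)) ->
  (forall y, Y y -> P y = y) ->
  (* U : Y -> l_p is an isomorphism onto l_p *)
  is_op Y (d_norm w p) (lp p) (lp_norm p) U ->
  (forall z, lp p z -> exists2 y, Y y & U y = z) ->
  (forall y1 y2, Y y1 -> Y y2 -> U y1 = U y2 -> y1 = y2) ->
  (exists2 c : R, 0 < c & forall y, Y y -> c * d_norm w p y <= lp_norm p (U y)) ->
  forall S : (nat -> R) -> (nat -> R),
    JT w p (fun x => jmap (U (P x))) S <-> Jj w p S.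
Proof.
move=> p1 lw [Yd [Y0 [Ylin _]]] hP hPY hPid hU Uonto Uinj [c c0 hc] S.
have p0 : 0 < p by apply: lt_le_trans p1; exact: ltr01.
have hP' := Ld_to_Y hP hPY.
have nn : forall x, dwp w p x -> 0 <= d_norm w p x by move=> x _; exact: d_norm_ge0.
have nnY : forall x, Y x -> 0 <= d_norm w p x by move=> x _; exact: d_norm_ge0.
split.
- move=> [LdS [n [A [B [hAB hS]]]]]; split; first exact: LdS.
  pose F m x := fun k => \sum_(i < m) A i (jmap (U (P (B i x)))) k.
  have HF : forall m, (m <= n)%N -> Jex w p (F m).
    elim => [_|m IH mn].
      apply: Jex_ext (Jex_zero w p0) => x _; apply: funext => k.
      by rewrite /F big_ord0.
    have [hA hB] := hAB m mn.
    apply: (Jex_ext (S' := fun x k => F m x k + A m (jmap (U (P (B m x)))) k)).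
      by move=> x _; apply: funext => k; rewrite /F big_ord_recr.
    apply: (Jex_add lw p1); first by apply: IH; apply: ltnW.
    exists (A m), (fun x => U (P (B m x))); split; first exact: hA.
    split; last by move=> x _.
    apply: (op_comp _ hU nn nnY).
    exact: (op_comp hB hP' nn nn).
  have [A' [B' [hA' [hB' hS']]]] := HF n (leqnn n).
  exists A', B'; split; first exact: hA'.
  split; first exact: hB'.
  move=> x Xx; rewrite (hS x Xx) -(hS' x Xx); reflexivity.
- move=> [LdS [A [B [hA [hB hS]]]]]; split; first exact: LdS.
  pose V (z : nat -> R) : nat -> R :=
    if pselect (exists y, Y y /\ U y = z) is left h then projT1 (cid h) else (fun _ => 0).
  have V_spec : forall z, lp p z -> Y (V z) /\ U (V z) = z.
    move=> z hz; rewrite /V; case: pselect => [h|h].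
      exact: (projT2 (cid h)).
    exfalso; apply: h; have [y Yy Uy] := Uonto z hz; by exists y.
  have [CB [CB0 HB]] := op_bound hB nn.
  case: (hB) => Bmap [Blin _]; case: (hU) => Umap [Ulin _].
  exists 1%N, (fun _ => A), (fun _ x => V (B x)); split.
    move=> i _; split; first exact: hA.
    split.
      move=> x Xx; apply: Yd; exact: (V_spec _ (Bmap _ Xx)).1.
    split.
      move=> a x y Xx Xy; rewrite (Blin a x y Xx Xy).
      have [Y1 U1] := V_spec _ (Bmap _ Xx); have [Y2 U2] := V_spec _ (Bmap _ Xy).
      pose u := fun n => a * V (B x) n + V (B y) n.
      have Yu : Y u by apply: Ylin.
      have Uu : U u = (fun n => a * B x n + B y n) by rewrite /u (Ulin a _ _ Y1 Y2) U1 U2.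
      rewrite -Uu; apply: Uinj.
      - exact: (V_spec _ (Umap _ Yu)).1.
      - exact: Yu.
      - exact: (V_spec _ (Umap _ Yu)).2.
    exists (CB / c) => x Xx.
    have [Y1 U1] := V_spec _ (Bmap _ Xx).
    have h1 : c * d_norm w p (V (B x)) <= CB * d_norm w p x.
      apply: le_trans (hc _ Y1) _; rewrite U1; exact: HB.
    rewrite mulrAC (ler_pdivlMr _ _ c0) mulrC; exact: h1.
  move=> x Xx; apply: funext => k; rewrite big_ord1 (hS x Xx).
  have [Y1 U1] := V_spec _ (Bmap _ Xx).
  by rewrite /jmap (hPid _ Y1) U1.
Qed.
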